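(* Let $d\ge 1$, let $x\sim\mathcal N(0,\Sigma)$ on $\mathbb R^d$ with $\Sigma=\mathrm{diag}(\sigma_1^2,\ldots,\sigma_d^2)$ and $\sigma_1^2>\sigma_2^2>\cdots>\sigma_d^2>0$, let $\varepsilon\in(0,1)$, $R>0$ and $T_{\mathrm{wu}}\ge 0$. For $j=1,\dots,d$ and $T\ge0$ let $$g_j(T)=\Bigl(1+\tfrac{1-\varepsilon^2}{\varepsilon^2}\,e^{-4\sigma_j^2 T}\Bigr)^{-1}$$ (the activation $u_jv_j$ of mode $j$ at time $T$ of the plain-autoencoder flow below started from $u_j(0)=v_j(0)=\varepsilon$). Define $$m^{\mathrm{wu}}(T_{\mathrm{wu}},R):=\max\Bigl\{m\in\{1,\dots,d\}:\ R>\tfrac12\sum_{i=1}^{m-1}\log_2\frac{\sigma_i^2\,g_i(T_{\mathrm{wu}})}{\sigma_m^2\,g_m(T_{\mathrm{wu}})}\Bigr\}.$$ Consider the following two-phase training (warm-up then RD-AE) of the diagonal linear model $W_1=\mathrm{diag}(u_1,\dots,u_d)$, $W_2=\mathrm{diag}(v_1,\dots,v_d)$: on $[0,T_{\mathrm{wu}}]$ run the plain-autoencoder flow from $u_j(0)=v_j(0)=\varepsilon$, and for $t\ge T_{\mathrm{wu}}$ run the RD-AE flow at rate $R$ with commitment weight $\beta=1$ (both flows defined in the context). Then at convergence at most $m^{\mathrm{wu}}$ modes remain active, and the limiting reconstruction loss satisfies $$L_{\mathrm{rec}}^{\infty}\;\ge\; m^{\mathrm{wu}}\,\delta_{m^{\mathrm{wu}}}(R)+\sum_{j>m^{\mathrm{wu}}}\sigma_j^2,\qquad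 \delta_m(R):=\Bigl(\prod_{i=1}^m\sigma_i^2\Bigr)^{1/m}2^{-2R/m}.$$
   Context: Plain-autoencoder flow (per mode $j$): $\dot u_j=2\sigma_j^2 v_j(1-u_jv_j)$, $\dot v_j=2\sigma_j^2 u_j(1-u_jv_j)$. RD-AE channel at rate $R$ (bits): given the current parameters, the latent coordinates $z_j=u_jx_j$ have variances $\lambda_j=u_j^2\sigma_j^2$. The water level $D^\star=D^\star(\lambda_1,\dots,\lambda_d;R)$ is the unique solution of $\sum_{j}\tfrac12\log_2^+(\lambda_j/D^\star)=R$ (where $\log_2^+ y=\max(\log_2 y,0)$). Set $D_j=\min(\lambda_j,D^\star)$, $c_j=1-D_j/\lambda_j$, $\tau_j^2=c_jD^\star$. Mode $j$ is called active if $\lambda_j>D^\star$ and inactive otherwise (then $c_j=\tau_j^2=0$). This corresponds to the rate-distortion-optimal Gaussian channel $z_{q,j}\mid z_j\sim\mathcal N(c_jz_j,\tau_j^2)$ minimizing $\mathbb E\|z-z_q\|^2$ subject to $I(z;z_q)\le R$. RD-AE flow with commitment weight $\beta$ (channel parameters $c_j,D_j$ recomputed from the current $\lambda_j$ at every time): $\dot u_j=2\sigma_j^2 v_j(1-c_ju_jv_j)-\dfrac{2\beta D_j}{u_j}$, $\dot v_j=2\sigma_j^2c_ju_j(1-u_jv_j)$. Reconstruction loss: $L_{\mathrm{rec}}(u,v)=\sum_{j=1}^d\bigl[\sigma_j^2(1-c_ju_jv_j)^2+v_j^2\tau_j^2\bigr]$ (the expected value of $\|x-W_2z_q\|^2$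 through this channel), and $L_{\mathrm{rec}}^\infty$ denotes its limit as $t\to\infty$ along the two-phase trajectory. *)

(* Defs.v *)
From Stdlib Require Import Reals Lra Lia.
From Coquelicot Require Import Coquelicot.
Open Scope R_scope.

(* Modes are indexed 0 .. d-1 (mode j here = mode j+1 of the paper).
   s j stands for sigma_{j+1}^2. *)

Fixpoint fsum (n : nat) (f : nat -> R) : R :=
  match n with O => 0 | S k => fsum k f + f k end.

Fixpoint fprod (n : nat) (f : nat -> R) : R :=
  match n with O => 1 | S k => fprod k f * f k end.

Fixpoint fcount (n : nat) (P : nat -> Prop) (Pdec : forall j, {P j} + {~ P j}) : nat :=
  match n with
  | O => O
  | S k => (if Pdec k then 1 else 0) + fcount k P Pdec
  end%nat.

Definition log2 (y : R) : R := ln y / ln 2.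
Definition log2p (y : R) : R := Rmax (log2 y) 0.

Definition is_water_level (d : nat) (lam : nat -> R) (R0 D : R) : Prop :=
  0 < D /\ fsum d (fun j => / 2 * log2p (lam j / D)) = R0.

Definition Dj (lamj D : R) : R := Rmin lamj D.
Definition cj (lamj D : R) : R := if Rlt_dec D lamj then 1 - Dj lamj D / lamj else 0.
Definition tau2j (lamj D : R) : R := cj lamj D * D.

Definition g (eps sj T : R) : R :=
  / (1 + (1 - eps ^ 2) / eps ^ 2 * exp (- 4 * sj * T)).

(* condition defining m^wu (m is 1-based, 1 <= m <= d) *)
Definition mwu_cond (s : nat -> R) (eps Twu R0 : R) (m : nat) : Prop :=
  R0 > / 2 * fsum (m - 1)
         (fun i => log2 ((s i * g eps (s i) Twu) /
                         (s (m - 1)%nat * g eps (s (m - 1)%nat) Twu))).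

Definition is_mwu (d : nat) (s : nat -> R) (eps Twu R0 : R) (m : nat) : Prop :=
  (1 <= m <= d)%nat /\ mwu_cond s eps Twu R0 m /\
  (forall m', (m < m' <= d)%nat -> ~ mwu_cond s eps Twu R0 m').

Definition delta (s : nat -> R) (m : nat) (R0 : R) : R :=
  Rpower (fprod m s) (/ INR m) * Rpower 2 (- 2 * R0 / INR m).

Definition lam (s : nat -> R) (u : nat -> R -> R) (t : R) : nat -> R :=
  fun j => u j t ^ 2 * s j.

Definition Lrec (d : nat) (s : nat -> R) (u v : nat -> R -> R) (Dt t : R) : R :=
  fsum d (fun j =>
    s j * (1 - cj (lam s u t j) Dt * u j t * v j t) ^ 2
    + v j t ^ 2 * tau2j (lam s u t j) Dt).

(* Main.v *)
Require Import Defs.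
From Stdlib Require Import Reals Lra Lia Psatz Arith.
From Coquelicot Require Import Coquelicot.
Open Scope R_scope.

Lemma D_eq (f : R -> R) (x l l' : R) : is_derive f x l -> l = l' -> is_derive f x l'.
Proof. intros H ->; exact H. Qed.

Lemma D_mult (f g : R -> R) (x df dg : R) : is_derive f x df -> is_derive g x dg ->
  is_derive (fun t => f t * g t) x (df * g x + f x * dg).
Proof. intros Hf Hg. apply (is_derive_mult f g x df dg Hf Hg). intros; apply Rmult_comm. Qed.

Lemma D_plus (f g : R -> R) (x df dg : R) : is_derive f x df -> is_derive g x dg ->
  is_derive (fun t => f t + g t) x (df + dg).
Proof. intros Hf Hg. apply (is_derive_plus f g x df dg Hf Hg). Qed.

Lemma D_minus (f g : R -> R) (x df dg : R) : is_derive f x df -> is_derive g x dg ->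
  is_derive (fun t => f t - g t) x (df - dg).
Proof. intros Hf Hg. apply (is_derive_minus f g x df dg Hf Hg). Qed.

Lemma D_const (a x : R) : is_derive (fun _ => a) x 0.
Proof. apply (is_derive_const a x). Qed.

Lemma D_id (x : R) : is_derive (fun t => t) x 1.
Proof. apply (is_derive_id x). Qed.

Lemma D_exp (f : R -> R) (x df : R) : is_derive f x df -> is_derive (fun t => exp (f t)) x (df * exp (f x)).
Proof. intros H. apply (is_derive_comp exp f x (exp (f x)) df (is_derive_exp (f x)) H). Qed.

Lemma lim_mult (F : (R -> Prop) -> Prop) {FF : Filter F} (f g : R -> R) (a b : R) :
  filterlim f F (locally a) -> filterlim g F (locally b) ->
  filterlim (fun t => f t * g t) F (locally (a * b)).
Proof. intros Hf Hg. eapply filterlim_comp_2; [exact Hf|exact Hg|]. apply (filterlim_mult a b). Qed.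

Lemma lim_plus (F : (R -> Prop) -> Prop) {FF : Filter F} (f g : R -> R) (a b : R) :
  filterlim f F (locally a) -> filterlim g F (locally b) ->
  filterlim (fun t => f t + g t) F (locally (a + b)).
Proof. intros Hf Hg. eapply filterlim_comp_2; [exact Hf|exact Hg|]. apply (filterlim_plus a b). Qed.

Lemma lim_comp (F : (R -> Prop) -> Prop) {FF : Filter F} (f q : R -> R) (a : R) :
  filterlim f F (locally a) -> continuous q a ->
  filterlim (fun t => q (f t)) F (locally (q a)).
Proof. intros Hf Hq. eapply filterlim_comp; eauto. Qed.

Lemma lim_const (F : (R -> Prop) -> Prop) {FF : Filter F} (a : R) :
  filterlim (fun _ => a) F (locally a).
Proof. apply filterlim_const. Qed.

Lemma lim_opp (F : (R -> Prop) -> Prop) {FF : Filter F} (f : R -> R) (a : R) :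
  filterlim f F (locally a) -> filterlim (fun t => - f t) F (locally (- a)).
Proof. intros H. replace (-a) with (-1 * a) by ring.
  apply (filterlim_ext (fun t => -1 * f t)); [intros; ring|].
  apply (lim_comp F f (fun y => -1 * y) a H).
  apply continuity_pt_filterlim. apply continuity_pt_mult. apply continuity_pt_const. intros ??; auto.
  apply continuity_pt_id. Qed.

Lemma lim_minus (F : (R -> Prop) -> Prop) {FF : Filter F} (f g : R -> R) (a b : R) :
  filterlim f F (locally a) -> filterlim g F (locally b) ->
  filterlim (fun t => f t - g t) F (locally (a - b)).
Proof. intros Hf Hg. apply lim_plus; auto. apply lim_opp; auto. Qed.

Lemma lim_rc_id (a : R) : filterlim (fun t => t) (at_right a) (locally a).
Proof. intros P [e He]. exists e. intros y Hy _. apply He. exact Hy. Qed.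

Lemma lim_loc_id (a : R) : filterlim (fun t => t) (locally a) (locally a).
Proof. apply filterlim_id. Qed.

Lemma rc_eps (f : R -> R) (a l : R) : filterlim f (at_right a) (locally l) ->
  forall e, 0 < e -> exists d, 0 < d /\ forall t, a < t < a + d -> Rabs (f t - l) < e.
Proof.
  intros H e He.
  destruct (H (fun y => Rabs (y - l) < e)) as [d Hd].
  { exists (mkposreal e He). intros y Hy. exact Hy. }
  exists d. split; [apply cond_pos|]. intros t Ht. apply Hd; [|lra].
  change (Rabs (t - a) < d). rewrite Rabs_right; lra.
Qed.

Lemma cont_eps (f : R -> R) (b : R) : continuous f b ->
  forall e, 0 < e -> exists d, 0 < d /\ forall t, Rabs (t - b) < d -> Rabs (f t - f b) < e.
Proof.
  intros H e He.
  destruct (H (fun y => Rabs (y - f b) < e)) as [d Hd].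
  { exists (mkposreal e He). intros y Hy. exact Hy. }
  exists d. split; [apply cond_pos|]. intros t Ht. apply Hd. exact Ht.
Qed.

Lemma mono (f df : R -> R) (a b : R) : a <= b ->
  (forall t, a < t < b -> is_derive f t (df t)) ->
  (forall t, a < t < b -> df t <= 0) ->
  (a < b -> continuous f b) ->
  filterlim f (at_right a) (locally (f a)) -> f b <= f a.
Proof.
  intros Hab Hd Hn Hcb Hra.
  destruct (Req_dec a b) as [->|Hne]; [lra|].
  assert (Hlt : a < b) by lra. specialize (Hcb Hlt).
  assert (Hint : forall t1 t2, a < t1 -> t1 <= t2 -> t2 < b -> f t2 <= f t1).
  { intros t1 t2 H1 H12 H2.
    destruct (Req_dec t1 t2) as [->|Hn12]; [lra|].
    destruct (MVT_gen f t1 t2 df) as [c [Hc Heq]].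
    - rewrite Rmin_left by lra; rewrite Rmax_right by lra. intros x Hx. apply Hd. lra.
    - rewrite Rmin_left by lra; rewrite Rmax_right by lra. intros x Hx.
      apply continuity_pt_filterlim. apply (ex_derive_continuous (K:=R_AbsRing) (V:=R_NormedModule)). eexists. apply Hd. lra.
    - rewrite Rmin_left in Hc by lra; rewrite Rmax_right in Hc by lra.
      assert (df c <= 0) by (apply Hn; lra).
      assert (df c * (t2 - t1) <= 0). { apply Rmult_le_0_r; lra. }
      lra. }
  destruct (Rle_dec (f b) (f a)) as [Hle|Hgt]; [exact Hle|exfalso].
  set (e := (f b - f a) / 2).
  assert (He : 0 < e) by (unfold e; lra).
  destruct (rc_eps f a (f a) Hra e He) as [d1 [Hd1 H1]].
  destruct (cont_eps f b Hcb e He) as [d2 [Hd2 H2]].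
  set (t1 := a + Rmin d1 (b - a) / 2).
  assert (Ht1a : a < t1) by (unfold t1; assert (0 < Rmin d1 (b-a)) by (apply Rmin_pos; lra); lra).
  assert (Ht1b : t1 < b) by (unfold t1; assert (Rmin d1 (b-a) <= b - a) by apply Rmin_r; lra).
  assert (Ht1d : t1 < a + d1) by (unfold t1; assert (Rmin d1 (b-a) <= d1) by apply Rmin_l;
     assert (0 < Rmin d1 (b-a)) by (apply Rmin_pos; lra); lra).
  set (t2 := b - Rmin d2 (b - t1) / 2).
  assert (0 < Rmin d2 (b - t1)) by (apply Rmin_pos; lra).
  assert (Rmin d2 (b - t1) <= d2) by apply Rmin_l.
  assert (Rmin d2 (b - t1) <= b - t1) by apply Rmin_r.
  assert (Ht2 : t1 <= t2 < b) by (unfold t2; lra).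
  assert (Ht2d : Rabs (t2 - b) < d2) by (unfold t2; rewrite Rabs_left; lra).
  specialize (H1 t1 (conj Ht1a Ht1d)). specialize (H2 t2 Ht2d).
  specialize (Hint t1 t2 Ht1a (proj1 Ht2) (proj2 Ht2)).
  apply Rabs_def2 in H1. apply Rabs_def2 in H2. unfold e in *. lra.
Qed.

Definition qp (x : R) : R := Rmax x 0 * Rmax x 0.

Lemma qp_derive (x : R) : is_derive qp x (2 * Rmax x 0).
Proof.
  destruct (Rlt_le_dec 0 x) as [Hx|Hx].
  - apply (is_derive_ext_loc (fun t => t * t)).
    { exists (mkposreal x Hx). intros y Hy. change (Rabs (y - x) < x) in Hy.
      apply Rabs_def2 in Hy. unfold qp. rewrite Rmax_left by lra. reflexivity. }
    rewrite Rmax_left by lra. apply (D_eq _ _ (1 * x + x * 1)).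
    apply D_mult; apply D_id. ring.
  - destruct (Rlt_le_dec x 0) as [Hx'|Hx'].
    + apply (is_derive_ext_loc (fun t => 0)).
      { assert (Hp : 0 < - x) by lra. exists (mkposreal (-x) Hp). intros y Hy.
        change (Rabs (y - x) < - x) in Hy.
        apply Rabs_def2 in Hy. unfold qp. rewrite Rmax_right by lra. simpl. ring. }
      rewrite Rmax_right by lra. apply (D_eq _ _ 0). apply D_const. ring.
    + assert (x = 0) by lra. subst x. apply is_derive_Reals.
      intros e He. exists (mkposreal e He). intros h Hh0 Hh. simpl in Hh.
      unfold qp. rewrite (Rmax_right 0 0) by lra. rewrite Rplus_0_l.
      destruct (Rlt_le_dec 0 h).
      * rewrite Rmax_left by lra.
        replace ((h * h - 0 * 0) / h - 2 * 0) with h by (field; lra). exact Hh.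
      * rewrite Rmax_right by lra.
        replace ((0 * 0 - 0 * 0) / h - 2 * 0) with 0 by (field; lra). rewrite Rabs_R0. lra.
Qed.

Lemma qp_cont (x : R) : continuous qp x.
Proof. apply (ex_derive_continuous (K:=R_AbsRing) (V:=R_NormedModule)). eexists. apply qp_derive. Qed.

Lemma exp_cont (x : R) : continuous exp x.
Proof. apply continuity_pt_filterlim. apply derivable_continuous_pt. apply derivable_pt_exp. Qed.

Lemma lim_phi (F : (R -> Prop) -> Prop) {FF : Filter F} (h : R -> R) (K x0 : R) :
  filterlim h F (locally (h x0)) -> filterlim (fun t => t) F (locally x0) ->
  filterlim (fun t => qp (h t) * exp (- (2 * K) * t)) F
    (locally (qp (h x0) * exp (- (2 * K) * x0))).
Proof.
  intros Hh Hid. apply (@lim_mult F FF).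
  - apply (@lim_comp F FF h qp (h x0)); auto. apply qp_cont.
  - apply (@lim_comp F FF (fun t => - (2*K) * t) exp); [|apply exp_cont].
    apply (@lim_mult F FF); auto. apply (@lim_const F FF).
Qed.

Lemma stayK (h dh : R -> R) (a b K : R) : a <= b -> 0 <= K ->
  (forall t, a < t < b -> is_derive h t (dh t)) ->
  (forall t, a < t < b -> 0 < h t -> dh t <= K * h t) ->
  (a < b -> continuous h b) ->
  filterlim h (at_right a) (locally (h a)) -> h a <= 0 -> h b <= 0.
Proof.
  intros Hab HK Hd Hdn Hcb Hra Ha.
  set (Phi := fun t => qp (h t) * exp (- (2 * K) * t)).
  assert (Hm : Phi b <= Phi a).
  { apply (mono Phi (fun t => (dh t * (2 * Rmax (h t) 0)) * exp (- (2 * K) * t)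
                         + qp (h t) * ((- (2 * K) * 1) * exp (- (2 * K) * t)))); auto.
    - intros t Ht. unfold Phi. apply (D_mult (fun t => qp (h t)) (fun t => exp (-(2*K)*t))).
      + apply (is_derive_comp qp h t (2 * Rmax (h t) 0) (dh t)); [apply qp_derive|auto].
      + apply (D_exp (fun t => -(2*K)*t)). apply is_derive_scal. apply D_id.
    - intros t Ht. pose proof (exp_pos (- (2 * K) * t)) as He. unfold qp.
      destruct (Rlt_le_dec 0 (h t)) as [Hp|Hp].
      + rewrite Rmax_left by lra. specialize (Hdn t Ht Hp).
        assert (dh t * (2 * h t) <= 2 * K * h t * h t) by nra. nra.
      + rewrite Rmax_right by lra. nra.
    - intros Hlt. specialize (Hcb Hlt). unfold Phi.
      exact (@lim_phi (locally b) _ h K b Hcb (lim_loc_id b)).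
    - unfold Phi. apply (@lim_phi (at_right a) _ h K a); auto. apply lim_rc_id. }
  unfold Phi, qp in Hm. rewrite (Rmax_right (h a) 0) in Hm by lra.
  pose proof (exp_pos (- (2 * K) * b)).
  destruct (Rle_dec (h b) 0) as [|Hn]; auto. exfalso. assert (Hp : 0 < h b) by lra. rewrite Rmax_left in Hm by lra.
  assert (0 < h b * h b) by nra. nra.
Qed.

Lemma bounded_on (f : R -> R) (a b : R) : a <= b ->
  filterlim f (at_right a) (locally (f a)) ->
  (forall t, a < t <= b -> continuous f t) ->
  exists M, 0 <= M /\ forall t, a <= t <= b -> Rabs (f t) <= M.
Proof.
  intros Hab Hra Hc.
  set (F := fun t => Rabs (f (Rmax a t))).
  assert (HF : forall c, a <= c <= b -> continuity_pt F c).
  { intros c Hc'. apply continuity_pt_filterlim.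
    destruct (Req_dec c a) as [->|Hne].
    - intros P [e He]. destruct (rc_eps f a (f a) Hra e (cond_pos e)) as [d [Hd Hd']].
      exists (mkposreal d Hd). intros y Hy. change (Rabs (y - a) < d) in Hy.
      apply He. change (Rabs (F y - F a) < e). unfold F.
      rewrite (Rmax_left a a) by lra.
      destruct (Rle_dec y a).
      + rewrite Rmax_left by lra. unfold Rminus. rewrite Rplus_opp_r, Rabs_R0. apply cond_pos.
      + rewrite Rmax_right by lra. apply Rabs_def2 in Hy.
        eapply Rle_lt_trans; [apply Rabs_triang_inv2|]. apply Hd'. lra.
    - assert (Hca : 0 < c - a) by lra.
      change (continuous F c). apply (continuous_ext_loc _ (fun y => Rabs (f y))).
      { exists (mkposreal (c - a) Hca). intros y Hy. change (Rabs (y - c) < c - a) in Hy.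
        apply Rabs_def2 in Hy. unfold F. rewrite Rmax_right by lra. reflexivity. }
      apply (continuous_comp f Rabs). apply Hc. lra.
      apply continuity_pt_filterlim. apply Rcontinuity_abs. }
  destruct (continuity_ab_maj F a b Hab HF) as [Mx [HM HMx]].
  exists (F Mx). split. unfold F. apply Rabs_pos.
  intros t Ht. specialize (HM t Ht). unfold F in HM at 1. rewrite Rmax_right in HM by lra. exact HM.
Qed.

Lemma fsum_le n f g : (forall j, (j < n)%nat -> f j <= g j) -> fsum n f <= fsum n g.
Proof. induction n; simpl; intros H; [lra|]. pose proof (H n ltac:(lia)).
  assert (fsum n f <= fsum n g) by (apply IHn; intros; apply H; lia). lra. Qed.

Lemma fsum_lt n f g j0 : (j0 < n)%nat -> (forall j, (j < n)%nat -> f j <= g j) -> f j0 < g j0 ->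
  fsum n f < fsum n g.
Proof. induction n; simpl; intros Hj H Hs; [lia|].
  destruct (Nat.eq_dec j0 n) as [->|Hne].
  - assert (fsum n f <= fsum n g) by (apply fsum_le; intros; apply H; lia). lra.
  - pose proof (H n ltac:(lia)). assert (fsum n f < fsum n g).
    { apply IHn; auto; try lia. } lra.
Qed.



Lemma fsum_zero n : fsum n (fun _ => 0) = 0.
Proof. induction n; simpl; [|rewrite IHn]; lra. Qed.

Lemma fsum_pos_ex n f : 0 < fsum n f -> exists j, (j < n)%nat /\ 0 < f j.
Proof. intros H. destruct (Classical_Prop.classic (exists j, (j < n)%nat /\ 0 < f j)) as [?|Hn]; auto.
  exfalso. assert (fsum n f <= fsum n (fun _ => 0)).
  { apply fsum_le. intros j Hj. destruct (Rle_dec (f j) 0); auto. exfalso; apply Hn; exists j; split; auto; lra. }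
  rewrite fsum_zero in H0. lra. Qed.

Lemma fsum_ext n f g : (forall j, (j < n)%nat -> f j = g j) -> fsum n f = fsum n g.
Proof. induction n; simpl; intros H; [lra|]. rewrite IHn by (intros; apply H; lia). rewrite H by lia. reflexivity. Qed.

Lemma fsum_plus n f g : fsum n (fun j => f j + g j) = fsum n f + fsum n g.
Proof. induction n; simpl; [|rewrite IHn]; lra. Qed.

Lemma fsum_scal n c f : fsum n (fun j => c * f j) = c * fsum n f.
Proof. induction n; simpl; [|rewrite IHn]; lra. Qed.

Lemma fsum_const n c : fsum n (fun _ => c) = INR n * c.
Proof. induction n; simpl fsum; [simpl; lra|]. rewrite IHn, S_INR. lra. Qed.

Lemma fsum_split n m f g : (m <= n)%nat ->
  fsum n (fun j => if lt_dec j m then f j else g j) = fsum m f + (fsum n g - fsum m g).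
Proof.
  intros H. induction n.
  - assert (m = 0%nat) by lia. subst. simpl. lra.
  - destruct (Nat.eq_dec m (S n)) as [->|Hne].
    + simpl. rewrite (fsum_ext n _ f). destruct (lt_dec n (S n)); [lra|lia].
      intros j Hj. destruct (lt_dec j (S n)); auto; lia.
    + simpl. rewrite IHn by lia. destruct (lt_dec n m); [lia|]. lra.
Qed.

Lemma fprod_ln n f : (forall j, (j < n)%nat -> 0 < f j) ->
  0 < fprod n f /\ ln (fprod n f) = fsum n (fun j => ln (f j)).
Proof. induction n; simpl; intros H. split; [lra|apply ln_1].
  destruct IHn as [H1 H2]. intros; apply H; lia. pose proof (H n ltac:(lia)).
  split. nra. rewrite ln_mult by auto. rewrite H2. lra. Qed.

Lemma ln_le_xm1 x : 0 < x -> ln x <= x - 1.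
Proof. intros Hx. pose proof (exp_ineq1_le (ln x)). rewrite exp_ln in H by auto. lra. Qed.

Lemma amgm n a : (1 <= n)%nat -> (forall j, (j < n)%nat -> 0 < a j) ->
  INR n * exp (fsum n (fun j => ln (a j)) / INR n) <= fsum n a.
Proof.
  intros Hn Ha. set (S := fsum n (fun j => ln (a j))). set (G := exp (S / INR n)).
  assert (HG : 0 < G) by apply exp_pos.
  assert (HnR : 0 < INR n) by (apply lt_0_INR; lia).
  assert (H1 : fsum n (fun j => ln (a j) - ln G) <= fsum n (fun j => a j / G - 1)).
  { apply fsum_le. intros j Hj. pose proof (Ha j Hj).
    replace (ln (a j) - ln G) with (ln (a j / G)).
    2:{ unfold Rdiv. rewrite ln_mult, ln_Rinv; auto. apply Rinv_0_lt_compat; auto. }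
    apply ln_le_xm1.
    apply Rdiv_lt_0_compat; auto. }
  assert (E1 : fsum n (fun j => ln (a j) - ln G) = S - INR n * ln G).
  { unfold Rminus. rewrite fsum_plus, fsum_const. unfold S. lra. }
  assert (E2 : fsum n (fun j => a j / G - 1) = / G * fsum n a - INR n).
  { unfold Rminus. rewrite fsum_plus, fsum_const. rewrite <- fsum_scal.
    rewrite (fsum_ext n (fun j => a j / G) (fun j => / G * a j)) by (intros; unfold Rdiv; ring). lra. }
  assert (E3 : ln G = S / INR n) by (unfold G; apply ln_exp).
  rewrite E1, E2, E3 in H1.
  assert (S - INR n * (S / INR n) = 0) by (field; lra).
  assert (Hk : INR n <= / G * fsum n a) by lra.
  apply (Rmult_le_compat_l G) in Hk; [|lra].
  rewrite <- Rmult_assoc, Rinv_r in Hk by lra. unfold G in *. lra.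
Qed.

Lemma log2p_nonneg x : 0 <= log2p x.
Proof. unfold log2p. apply Rmax_r. Qed.

Lemma ln2_pos : 0 < ln 2.
Proof. pose proof ln_lt_2. lra. Qed.

Lemma log2p_mono x y : x <= y -> log2p x <= log2p y.
Proof.
  intros H. unfold log2p, log2. destruct (Rle_dec x 0).
  - unfold ln at 1. destruct (Rlt_dec 0 x); [exfalso; lra|]. unfold Rdiv. rewrite Rmult_0_l.
    rewrite (Rmax_right 0 0) by lra. apply Rmax_r.
  - apply Rle_max_compat_r. apply Rmult_le_compat_r.
    left; apply Rinv_0_lt_compat, ln2_pos.
    destruct (Req_dec x y) as [->|]; [lra|]. left; apply ln_increasing; lra.
Qed.

Lemma log2p_strict x y : 1 < x -> x < y -> log2p x < log2p y.
Proof.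
  intros H1 H2. unfold log2p, log2. pose proof ln2_pos.
  assert (0 < ln x) by (rewrite <- ln_1; apply ln_increasing; lra).
  assert (ln x < ln y) by (apply ln_increasing; lra).
  rewrite !Rmax_left. apply Rmult_lt_compat_r; auto. apply Rinv_0_lt_compat; auto.
  left. apply Rdiv_lt_0_compat; lra. left. apply Rdiv_lt_0_compat; lra.
Qed.

Lemma log2p_le1 x : x <= 1 -> log2p x = 0.
Proof.
  intros H. unfold log2p, log2. apply Rmax_right.
  destruct (Rle_dec x 0).
  - unfold ln. destruct (Rlt_dec 0 x); [exfalso; lra|]. unfold Rdiv; lra.
  - assert (ln x <= 0). { destruct (Req_dec x 1) as [->|]. rewrite ln_1; lra. rewrite <- ln_1. left; apply ln_increasing; lra. }
    unfold Rdiv. pose proof ln2_pos. assert (0 < / ln 2) by (apply Rinv_0_lt_compat; auto). nra.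
Qed.

Lemma wl_mono d l1 l2 R0 D1 D2 : 0 < R0 ->
  (forall j, (j < d)%nat -> 0 <= l1 j <= l2 j) ->
  is_water_level d l1 R0 D1 -> is_water_level d l2 R0 D2 -> D1 <= D2.
Proof.
  intros HR Hl [HD1 E1] [HD2 E2]. destruct (Rle_dec D1 D2) as [|Hn]; auto. exfalso.
  assert (Hp : 0 < fsum d (fun j => / 2 * log2p (l1 j / D1))) by lra.
  destruct (fsum_pos_ex _ _ Hp) as [j0 [Hj0 Hpos]].
  assert (Hl1 : 1 < l1 j0 / D1).
  { destruct (Rle_dec (l1 j0 / D1) 1) as [Hle|]; [|lra]. rewrite log2p_le1 in Hpos; lra. }
  assert (fsum d (fun j => / 2 * log2p (l1 j / D1)) < fsum d (fun j => / 2 * log2p (l2 j / D2))).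
  { apply (fsum_lt _ _ _ j0 Hj0).
    - intros j Hj. apply Rmult_le_compat_l; [lra|]. apply log2p_mono.
      destruct (Hl j Hj). unfold Rdiv. apply Rmult_le_compat; try lra.
      left; apply Rinv_0_lt_compat; lra. apply Rinv_le_contravar; lra.
    - apply Rmult_lt_compat_l; [lra|]. apply log2p_strict; auto.
      destruct (Hl j0 Hj0). assert (0 < l1 j0). { unfold Rdiv in Hl1. 
        destruct (Rle_dec (l1 j0) 0); [|lra]. assert (0 < / D1) by (apply Rinv_0_lt_compat; lra). nra. }
      apply (Rle_lt_trans _ (l2 j0 / D1)).
      unfold Rdiv. apply Rmult_le_compat_r. left; apply Rinv_0_lt_compat; lra. lra. 
      unfold Rdiv. apply Rmult_lt_compat_l; [lra|]. apply Rinv_lt_contravar; nra. }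
  lra.
Qed.

Lemma fcount_le d (P : nat -> Prop) dec m : (forall j, (m <= j < d)%nat -> ~ P j) ->
  (fcount d P dec <= m)%nat.
Proof.
  intros H. assert (forall n, (n <= d)%nat -> (fcount n P dec <= Nat.min n m)%nat).
  { induction n; cbn [fcount]; intros Hn; [lia|]. specialize (IHn ltac:(lia)).
    destruct (dec n) as [Hp|]; [|lia]. destruct (Nat.lt_ge_cases n m); [lia|].
    exfalso. apply (H n); auto; lia. }
  specialize (H0 d (le_n d)). lia.
Qed.

Ltac limt F :=
  first
  [ assumption
  | apply (@lim_const F _)
  | refine (@lim_mult F _ (fun t => _) (fun t => _) _ _ _ _); limt F
  | refine (@lim_minus F _ (fun t => _) (fun t => _) _ _ _ _); limt F
  | refine (@lim_plus F _ (fun t => _) (fun t => _) _ _ _ _); limt F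
  | refine (@lim_comp F _ (fun t => _) exp _ _ (exp_cont _)); limt F
  | refine (@lim_opp F _ (fun t => _) _ _); limt F ].

Lemma D_opp (f : R -> R) (x df : R) : is_derive f x df -> is_derive (fun t => - f t) x (- df).
Proof. intros H. apply (is_derive_opp f x df H). Qed.

Ltac dtac := lazymatch goal with
| |- is_derive (fun t => t) ?x _ => apply D_id
| |- is_derive (fun t => @?f t * @?g t) ?x _ => apply (D_mult f g x); dtac
| |- is_derive (fun t => @?f t - @?g t) ?x _ => apply (D_minus f g x); dtac
| |- is_derive (fun t => @?f t + @?g t) ?x _ => apply (D_plus f g x); dtac
| |- is_derive (fun t => - @?f t) ?x _ => apply (D_opp f x); dtac
| |- is_derive (fun t => exp (@?f t)) ?x _ => apply (D_exp f x); dtac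
| |- is_derive (fun t => ?u t) ?x _ => is_var u; eassumption
| |- is_derive _ _ _ => apply D_const
end.


Lemma cont_rc (f : R -> R) a : continuous f a -> filterlim f (at_right a) (locally (f a)).
Proof. intros H P HP. destruct (H P HP) as [e He]. exists e. intros y Hy _. apply He; auto. Qed.

Lemma cont_of (f : R -> R) b : filterlim f (locally b) (locally (f b)) -> continuous f b.
Proof. auto. Qed.


Definition Ccoef (eps : R) := (1 - eps ^ 2) / eps ^ 2.

Lemma g_bounds eps s T : 0 < eps < 1 -> 0 < g eps s T < 1.
Proof.
  intros He. unfold g. assert (0 < (1 - eps^2) / eps^2).
  { apply Rdiv_lt_0_compat; nra. }
  pose proof (exp_pos (- 4 * s * T)).
  assert (0 < (1 - eps ^ 2) / eps ^ 2 * exp (- 4 * s * T)) by nra.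
  split. apply Rinv_0_lt_compat; lra.
  rewrite <- Rinv_1. apply Rinv_lt_contravar; lra.
Qed.

Section WU.
Variables (s eps Twu : R) (u v : R -> R).
Hypothesis Hs : 0 < s.
Hypothesis Heps : 0 < eps < 1.
Hypothesis HT : 0 <= Twu.
Hypothesis Hu0 : u 0 = eps.
Hypothesis Hv0 : v 0 = eps.
Hypothesis Hru : filterlim u (at_right 0) (locally (u 0)).
Hypothesis Hrv : filterlim v (at_right 0) (locally (v 0)).
Hypothesis Hc : forall t, 0 < t -> continuous u t /\ continuous v t.
Hypothesis Hd : forall t, 0 < t < Twu ->
     is_derive u t (2 * s * v t * (1 - u t * v t)) /\
     is_derive v t (2 * s * u t * (1 - u t * v t)).

Lemma wu_a t : 0 <= t <= Twu -> u t * u t - v t * v t = 0.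
Proof.
  intros Ht.
  set (f := fun t => u t * u t - v t * v t).
  assert (Hf0 : f 0 = 0) by (unfold f; rewrite Hu0, Hv0; ring).
  assert (Hder : forall x, 0 < x < t -> is_derive f x 0).
  { intros x Hx. destruct (Hd x ltac:(lra)) as [Du Dv]. unfold f.
    eapply D_eq. apply D_minus; apply D_mult; eauto. ring. }
  assert (Hcb : 0 < t -> continuous f t).
  { intros Htp. destruct (Hc t Htp) as [Cu Cv]. apply cont_of. unfold f. limt (locally t). }
  assert (Hrf : filterlim f (at_right 0) (locally (f 0))).
  { unfold f. limt (at_right 0). }
  assert (f t <= f 0).
  { apply (mono f (fun _ => 0)); auto; [lra|intros; lra]. }
  assert (- f t <= - f 0).
  { apply (mono (fun x => - f x) (fun _ => 0)); auto; [lra| | intros; lra | |].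
    - intros x Hx. eapply D_eq. apply (D_opp f). apply Hder; auto. ring.
    - intros Htp. apply cont_of. refine (@lim_opp _ _ f (f t) _). apply Hcb; auto.
    - refine (@lim_opp _ _ f (f 0) _). auto. }
  fold (f t). lra.
Qed.

Lemma wu_b t : 0 <= t <= Twu -> eps ^ 2 <= u t * v t.
Proof.
  intros Ht.
  set (f := fun t => (u t * v t - 1) * (u t * v t - 1)).
  assert (Hder : forall x, 0 < x < t -> is_derive f x
     (-4 * s * ((1 - u x * v x) * (1 - u x * v x)) * (u x * u x + v x * v x))).
  { intros x Hx. destruct (Hd x ltac:(lra)) as [Du Dv]. unfold f.
    eapply D_eq; [dtac|]. ring. }
  assert (Hcb : 0 < t -> continuous f t).
  { intros Htp. destruct (Hc t Htp) as [Cu Cv]. apply cont_of. unfold f. limt (locally t). }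
  assert (Hrf : filterlim f (at_right 0) (locally (f 0))).
  { unfold f. limt (at_right 0). }
  assert (f t <= f 0).
  { apply (mono f (fun x => -4 * s * ((1 - u x * v x) * (1 - u x * v x)) * (u x * u x + v x * v x)) 0 t); auto; [lra|]. intros x Hx.
    assert (0 <= (1 - u x * v x) * (1 - u x * v x)) by apply Rle_0_sqr.
    assert (0 <= u x * u x + v x * v x) by (pose proof (Rle_0_sqr (u x)); pose proof (Rle_0_sqr (v x)); unfold Rsqr in *; lra).
    assert (0 <= 4 * s * ((1 - u x * v x) * (1 - u x * v x)) * (u x * u x + v x * v x)).
    { apply Rmult_le_pos; auto. apply Rmult_le_pos; auto. lra. }
    lra. }
  unfold f in H. rewrite Hu0, Hv0 in H.
  set (z := u t * v t) in *. set (e2 := eps * eps) in *.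
  assert (He2 : e2 < 1) by (unfold e2; nra).
  replace (eps ^ 2) with e2 by (unfold e2; ring).
  destruct (Rle_dec e2 z) as [|Hn]; auto. exfalso.
  assert (1 - e2 < 1 - z) by lra.
  assert ((1 - e2) * (1 - e2) < (1 - z) * (1 - z)) by (apply Rmult_le_0_lt_compat; lra).
  lra.
Qed.

Lemma wu_c t : 0 <= t <= Twu -> u t = v t.
Proof.
  intros Ht. pose proof (wu_a t Ht). pose proof (wu_b t Ht).
  assert (0 < eps ^ 2) by nra.
  assert ((u t - v t) * (u t + v t) = 0) by (rewrite <- H; ring).
  apply Rmult_integral in H2. destruct H2; [lra|]. exfalso.
  assert (v t = - u t) by lra. rewrite H3 in H0.
  assert (0 <= u t * u t) by apply Rle_0_sqr. lra.
Qed.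

Lemma wu t : 0 <= t <= Twu -> u t = v t /\ u t ^ 2 = g eps s t.
Proof.
  intros Ht. split; [apply wu_c; auto|].
  set (C := Ccoef eps).
  set (Psi := fun t => (1 - u t * v t) * exp (4 * s * t) - C * (u t * v t)).
  set (h := fun t => Psi t * Psi t).
  assert (Hh : h t <= 0).
  { apply (stayK h (fun x => 2 * Psi x * (- (2 * s * v x * (1 - u x * v x) * v x + u x * (2 * s * u x * (1 - u x * v x))) * exp (4 * s * x)
        + (1 - u x * v x) * ((4 * s * 1) * exp (4 * s * x))
        - C * (2 * s * v x * (1 - u x * v x) * v x + u x * (2 * s * u x * (1 - u x * v x))))) 0 t (8 * s)); try lra.
    - intros x Hx. destruct (Hd x ltac:(lra)) as [Du Dv]. unfold h, Psi.
      eapply D_eq; [dtac|]. ring.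
    - intros x Hx Hpos. assert (Hx' : 0 <= x <= Twu) by lra.
      pose proof (wu_c x Hx') as E1. pose proof (wu_b x Hx') as E2. rewrite <- E1 in *.
      unfold h, Psi in *. cbv beta in *. rewrite <- E1 in *.
      set (z := u x * u x) in *. set (E := exp (4 * s * x)) in *.
      assert (Hz : 0 <= z) by (unfold z; apply Rle_0_sqr).
      match goal with |- ?L <= _ => assert (HL : L = 8 * s * (1 - z) * (((1 - z) * E - C * z) * ((1 - z) * E - C * z))) by (unfold z; ring) end.
      rewrite HL. set (Q := ((1 - z) * E - C * z) * ((1 - z) * E - C * z)).
      assert (HQ : 0 <= Q) by apply Rle_0_sqr.
      assert (0 <= 8 * s * z * Q) by (apply Rmult_le_pos; [apply Rmult_le_pos|]; lra).
      unfold Q. unfold Q in H. lra.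
    - intros Htp. destruct (Hc t Htp) as [Cu Cv]. apply cont_of. unfold h, Psi.
      pose proof (lim_loc_id t). limt (locally t).
    - unfold h, Psi. pose proof (lim_rc_id 0). limt (at_right 0).
    - unfold h, Psi. rewrite Hu0, Hv0, Rmult_0_r, exp_0. unfold C, Ccoef.
      assert (0 < eps ^ 2) by nra. 
      replace ((1 - eps * eps) * 1 - (1 - eps ^ 2) / eps ^ 2 * (eps * eps)) with 0 by (field; lra). lra. }
  unfold h in Hh. assert (HP : Psi t = 0) by nra. unfold Psi in HP.
  pose proof (wu_c t Ht) as E1. rewrite <- E1 in HP.
  unfold g. replace (- 4 * s * t) with (- (4 * s * t)) by ring. rewrite exp_Ropp.
  pose proof (exp_pos (4 * s * t)).
  assert (0 <= C) by (unfold C, Ccoef; apply Rle_mult_inv_pos; nra).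
  fold (Ccoef eps). fold C.
  apply (Rmult_eq_reg_r (1 + C * / exp (4 * s * t))).
  2:{ assert (0 <= C * / exp (4 * s * t)) by (apply Rmult_le_pos; auto; left; apply Rinv_0_lt_compat; auto). lra. }
  rewrite Rinv_l by (assert (0 <= C * / exp (4 * s * t)) by (apply Rmult_le_pos; auto; left; apply Rinv_0_lt_compat; auto); lra).
  apply (Rmult_eq_reg_r (exp (4 * s * t))); [|lra].
  field_simplify; [|lra]. nra.
Qed.
End WU.

Definition Up (s uu vv D : R) : R :=
  2 * s * vv * (1 - cj (uu ^ 2 * s) D * uu * vv) - 2 * 1 * Dj (uu ^ 2 * s) D / uu.
Definition Vp (s uu vv D : R) : R :=
  2 * s * cj (uu ^ 2 * s) D * uu * (1 - uu * vv).

Lemma alg_w s uu vv D M : 0 < s -> 0 < D -> Rabs (uu * vv) <= M ->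
  2 * (uu - vv) * (Up s uu vv D - Vp s uu vv D) <= (8 * s * M) * ((uu - vv) * (uu - vv)).
Proof.
  intros Hs HD HM. unfold Up, Vp, cj, Dj.
  assert (Hw : 0 <= (uu - vv) * (uu - vv)) by apply Rle_0_sqr.
  assert (HM0 : 0 <= M) by (eapply Rle_trans; [apply Rabs_pos|exact HM]).
  destruct (Rlt_dec D (uu ^ 2 * s)) as [Ha|Hi].
  - rewrite Rmin_right by lra.
    assert (Hu : uu <> 0) by (intro; subst; simpl in Ha; lra).
    assert (Huu : 0 < uu * uu) by (assert (0 <= uu * uu) by apply Rle_0_sqr; destruct H; auto;
       exfalso; apply Hu; symmetry in H; apply Rmult_integral in H; tauto).
    set (r := D / (uu * uu)).
    assert (Hr0 : 0 < r) by (apply Rdiv_lt_0_compat; auto).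
    assert (Hrs : r < s).
    { unfold r. apply (Rmult_lt_reg_r (uu * uu)); auto. unfold Rdiv. rewrite Rmult_assoc, Rinv_l by lra.
      replace (uu ^ 2 * s) with (s * (uu * uu)) in Ha by ring. lra. }
    assert (E : 2 * (uu - vv) * (2 * s * vv * (1 - (1 - D / (uu ^ 2 * s)) * uu * vv) - 2 * 1 * D / uu -
      2 * s * (1 - D / (uu ^ 2 * s)) * uu * (1 - uu * vv)) =
      - ((uu - vv) * (uu - vv)) * (4 * s * (1 - uu * vv) + 4 * r * (uu * vv))).
    { unfold r. field. split; auto. lra. }
    rewrite E.
    assert (HB : 0 <= 8 * s * M + (4 * s * (1 - uu * vv) + 4 * r * (uu * vv))).
    { destruct (Rle_dec 0 (uu * vv)).
      - rewrite Rabs_right in HM by lra. nra.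
      - rewrite Rabs_left in HM by lra. nra. }
    nra.
  - rewrite Rmin_left by lra.
    replace (2 * s * 0 * uu * (1 - uu * vv)) with 0 by ring.
    destruct (Req_dec uu 0) as [->|Hu].
    + unfold Rdiv. rewrite Rinv_0. 
      replace (2 * (0 - vv) * (2 * s * vv * (1 - 0 * 0 * vv) - 2 * 1 * (0 ^ 2 * s) * 0 - 0))
        with (- (4 * s) * ((0 - vv) * (0 - vv))) by ring.
      assert (0 <= 8 * s * M) by nra. nra.
    + replace (2 * (uu - vv) * (2 * s * vv * (1 - 0 * uu * vv) - 2 * 1 * (uu ^ 2 * s) / uu - 0))
        with (- (4 * s) * ((uu - vv) * (uu - vv))) by (field; auto).
      assert (0 <= 8 * s * M) by nra. nra.
Qed.

Lemma alg_p s uu D : 0 < s -> 0 < D ->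
  2 * uu * Up s uu uu D = if Rlt_dec D (uu ^ 2 * s) then 4 * (1 - uu * uu) * (uu ^ 2 * s - D) else 0.
Proof.
  intros Hs HD. unfold Up, cj, Dj.
  destruct (Rlt_dec D (uu ^ 2 * s)) as [Ha|Hi].
  - rewrite Rmin_right by lra.
    assert (Hu : uu <> 0) by (intro; subst; simpl in Ha; lra).
    field. split; auto. lra.
  - rewrite Rmin_left by lra.
    destruct (Req_dec uu 0) as [->|Hu]. ring.
    field. auto.
Qed.

Section RD.
Variables (s Twu : R) (u v Dst : R -> R).
Hypothesis Hs : 0 < s.
Hypothesis HD : forall t, Twu <= t -> 0 < Dst t.
Hypothesis Hru : filterlim u (at_right Twu) (locally (u Twu)).
Hypothesis Hrv : filterlim v (at_right Twu) (locally (v Twu)).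
Hypothesis Hc : forall t, Twu < t -> continuous u t /\ continuous v t.
Hypothesis Hd : forall t, Twu < t ->
  is_derive u t (Up s (u t) (v t) (Dst t)) /\ is_derive v t (Vp s (u t) (v t) (Dst t)).
Hypothesis H0 : u Twu = v Twu.
Hypothesis Hp0 : 0 < u Twu * u Twu < 1.

Lemma rd_eq b : Twu <= b -> u b = v b.
Proof.
  intros Hb.
  destruct (bounded_on (fun t => u t * v t) Twu b Hb) as [M [HM0 HM]].
  { limt (at_right Twu). }
  { intros t Ht. destruct (Hc t ltac:(lra)). apply cont_of. limt (locally t). }
  set (h := fun t => (u t - v t) * (u t - v t)).
  assert (Hh : h b <= 0).
  { apply (stayK h (fun x => 2 * (u x - v x) * (Up s (u x) (v x) (Dst x) - Vp s (u x) (v x) (Dst x)))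
      Twu b (8 * s * M)); auto.
    - apply Rmult_le_pos; lra.
    - intros x Hx. destruct (Hd x ltac:(lra)) as [Du Dv]. unfold h. eapply D_eq; [dtac|]. ring.
    - intros x Hx _. apply alg_w; auto. apply HD; lra. apply HM; lra.
    - intros Hlt. destruct (Hc b Hlt). apply cont_of. unfold h. limt (locally b).
    - unfold h. limt (at_right Twu).
    - unfold h. rewrite H0. lra. }
  unfold h in Hh. assert ((u b - v b) * (u b - v b) = 0) by (pose proof (Rle_0_sqr (u b - v b)); unfold Rsqr in *; lra).
  apply Rmult_integral in H. lra.
Qed.

Lemma dp_at x : Twu < x ->
  is_derive (fun t => u t * u t) x
    (if Rlt_dec (Dst x) (u x ^ 2 * s) then 4 * (1 - u x * u x) * (u x ^ 2 * s - Dst x) else 0).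
Proof.
  intros Hx. destruct (Hd x Hx) as [Du Dv]. eapply D_eq; [dtac|].
  rewrite <- alg_p; auto; [|apply HD; lra]. rewrite <- (rd_eq x) by lra. ring.
Qed.

Lemma rd_le1 b : Twu <= b -> u b * u b <= 1.
Proof.
  intros Hb.
  assert (H : (fun t => u t * u t - 1) b <= 0).
  { apply (stayK (fun t => u t * u t - 1)
      (fun x => (if Rlt_dec (Dst x) (u x ^ 2 * s) then 4 * (1 - u x * u x) * (u x ^ 2 * s - Dst x) else 0) - 0)
      Twu b 0); auto; try lra.
    - intros x Hx. apply (D_minus (fun t => u t * u t) (fun _ => 1)). apply dp_at; lra. apply D_const.
    - intros x Hx Hpos. destruct (Rlt_dec (Dst x) (u x ^ 2 * s)).
      + assert (0 < u x ^ 2 * s - Dst x) by lra. nra.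
      + lra.
    - intros Hlt. destruct (Hc b Hlt). apply cont_of. limt (locally b).
    - limt (at_right Twu). }
  simpl in H. lra.
Qed.

Lemma rd_mono b : Twu <= b -> u Twu * u Twu <= u b * u b.
Proof.
  intros Hb.
  assert (H : - (u b * u b) <= - (u Twu * u Twu)).
  { apply (mono (fun t => - (u t * u t))
      (fun x => - (if Rlt_dec (Dst x) (u x ^ 2 * s) then 4 * (1 - u x * u x) * (u x ^ 2 * s - Dst x) else 0))
      Twu b); auto.
    - intros x Hx. apply (D_opp (fun t => u t * u t)). apply dp_at; lra.
    - intros x Hx. pose proof (rd_le1 x ltac:(lra)). destruct (Rlt_dec (Dst x) (u x ^ 2 * s)).
      + assert (0 < u x ^ 2 * s - Dst x) by lra. assert (0 <= 1 - u x * u x) by lra. nra.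
      + lra.
    - intros Hlt. destruct (Hc b Hlt). apply cont_of. limt (locally b).
    - refine (@lim_opp _ _ (fun t => u t * u t) _ _). limt (at_right Twu). }
  lra.
Qed.

Lemma rd_frozen (D0 : R) : (forall t, Twu <= t -> D0 <= Dst t) ->
  u Twu * u Twu * s <= D0 -> forall b, Twu <= b -> u b * u b * s <= D0.
Proof.
  intros HD0 Hi b Hb.
  assert (H : (fun t => u t * u t * s - D0) b <= 0).
  { apply (stayK (fun t => u t * u t * s - D0)
      (fun x => (if Rlt_dec (Dst x) (u x ^ 2 * s) then 4 * (1 - u x * u x) * (u x ^ 2 * s - Dst x) else 0) * s
         + (u x * u x) * 0 - 0)
      Twu b (4 * s)); auto; try lra.
    - intros x Hx. apply (D_minus (fun t => u t * u t * s) (fun _ => D0)); [|apply D_const].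
      apply (D_mult (fun t => u t * u t) (fun _ => s)). apply dp_at; lra. apply D_const.
    - intros x Hx Hpos. pose proof (rd_le1 x ltac:(lra)). pose proof (rd_mono x ltac:(lra)).
      pose proof (HD0 x ltac:(lra)).
      replace (u x ^ 2 * s) with (u x * u x * s) by ring.
      destruct (Rlt_dec (Dst x) (u x * u x * s)).
      + assert (0 <= 1 - u x * u x <= 1) by lra.
        assert (0 < u x * u x * s - Dst x) by lra.
        set (X := 4 * (1 - u x * u x) * (u x * u x * s - Dst x)).
        assert (HX : X <= 4 * (u x * u x * s - Dst x)) by (unfold X; nra).
        assert (X * s <= 4 * (u x * u x * s - Dst x) * s) by (apply Rmult_le_compat_r; lra).
        assert (0 <= (Dst x - D0) * s) by (apply Rmult_le_pos; lra).
        lra.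
      + assert (0 < s * (u x * u x * s - D0)) by (apply Rmult_lt_0_compat; lra). lra.
    - intros Hlt. destruct (Hc b Hlt). apply cont_of. limt (locally b).
    - limt (at_right Twu). }
  simpl in H. lra.
Qed.
End RD.

Definition xj (D Lj : R) : R := if Rlt_dec D Lj then D / Lj else 1.

Lemma term_bound s uu vv D : 0 < s -> 0 < D ->
  s * xj D (uu ^ 2 * s) <=
  s * (1 - cj (uu ^ 2 * s) D * uu * vv) ^ 2 + vv ^ 2 * tau2j (uu ^ 2 * s) D.
Proof.
  intros Hs HD. unfold xj, tau2j, cj, Dj.
  destruct (Rlt_dec D (uu ^ 2 * s)) as [Ha|Hi].
  - rewrite Rmin_right by lra.
    assert (Hu : uu <> 0) by (intro; subst; simpl in Ha; lra).
    assert (Hl : 0 < uu ^ 2 * s) by lra.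
    set (c := 1 - D / (uu ^ 2 * s)).
    assert (Hc : 0 < c) by (unfold c; assert (D / (uu^2*s) < 1) by (apply (Rmult_lt_reg_r (uu^2*s)); auto; unfold Rdiv; rewrite Rmult_assoc, Rinv_l; lra); lra).
    assert (E : s * (1 - c * uu * vv) ^ 2 + vv ^ 2 * (c * D) - s * (D / (uu ^ 2 * s))
       = s * c * (1 - uu * vv) ^ 2).
    { unfold c. field. split; auto. lra. }
    assert (0 <= s * c * (1 - uu * vv) ^ 2).
    { apply Rmult_le_pos; [nra|]. rewrite <- Rsqr_pow2. apply Rle_0_sqr. }
    lra.
  - replace (s * (1 - 0 * uu * vv) ^ 2 + vv ^ 2 * (0 * D)) with (s * 1) by ring. lra.
Qed.

Lemma fsum_prefix n1 n2 f : (n1 <= n2)%nat -> (forall j, (j < n2)%nat -> 0 <= f j) ->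
  fsum n1 f <= fsum n2 f.
Proof.
  intros H Hf. induction n2.
  - assert (n1 = 0%nat) by lia. subst. lra.
  - destruct (Nat.eq_dec n1 (S n2)) as [->|Hne]; [lra|].
    simpl. assert (fsum n1 f <= fsum n2 f) by (apply IHn2; [lia|intros; apply Hf; lia]).
    pose proof (Hf n2 ltac:(lia)). lra.
Qed.

Lemma log2_split a b c : 0 < a -> 0 < b -> 0 < c -> log2 (a / c) = log2 (a / b) + log2 (b / c).
Proof.
  intros. unfold log2, Rdiv. rewrite !ln_mult, !ln_Rinv; try apply Rinv_0_lt_compat; auto.
  field. pose proof ln2_pos. lra.
Qed.

Lemma log2_pos x : 1 < x -> 0 < log2 x.
Proof. intros. unfold log2. apply Rdiv_lt_0_compat; [|apply ln2_pos].
  rewrite <- ln_1. apply ln_increasing; lra. Qed.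

Lemma log2p_gt1 x : 1 < x -> log2p x = log2 x.
Proof. intros. unfold log2p. apply Rmax_left. left; apply log2_pos; auto. Qed.

Lemma mwu_inactive d (L : nat -> R) R0 D0 m :
  (forall j, (j < d)%nat -> 0 < L j) ->
  (forall j, (S j < d)%nat -> L (S j) < L j) ->
  is_water_level d L R0 D0 ->
  ((m < d)%nat -> ~ (R0 > / 2 * fsum m (fun i => log2 (L i / L m)))) ->
  forall j, (m <= j < d)%nat -> L j <= D0.
Proof.
  intros Hpos Hdec [HD0 HW] Hn j Hj.
  assert (Hch : forall i k, (i <= k < d)%nat -> L k <= L i).
  { intros i k Hik. induction k.
    - assert (i = 0%nat) by lia. subst. lra.
    - destruct (Nat.eq_dec i (S k)) as [->|]; [lra|].
      pose proof (Hdec k ltac:(lia)). assert (L k <= L i) by (apply IHk; lia). lra. }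
  destruct (Rle_dec (L j) D0) as [|Hgt]; auto. exfalso.
  assert (Hm : D0 < L m) by (pose proof (Hch m j Hj); lra).
  apply Hn; [lia|].
  assert (HmD : 1 < L m / D0) by (apply (Rmult_lt_reg_r D0); auto; unfold Rdiv; rewrite Rmult_assoc, Rinv_l; lra).
  assert (Hpre : fsum (S m) (fun j => / 2 * log2p (L j / D0)) <= R0).
  { rewrite <- HW. apply fsum_prefix; [lia|]. intros. apply Rmult_le_pos; [lra|apply log2p_nonneg]. }
  simpl in Hpre.
  assert (Hle : fsum m (fun i => / 2 * log2 (L i / L m)) <= fsum m (fun i => / 2 * log2p (L i / D0))).
  { apply fsum_le. intros i Hi. apply Rmult_le_compat_l; [lra|].
    pose proof (Hch i m ltac:(lia)). pose proof (Hpos i ltac:(lia)). pose proof (Hpos m ltac:(lia)).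
    assert (Hi1 : 1 < L i / D0) by (apply (Rmult_lt_reg_r D0); auto; unfold Rdiv; rewrite Rmult_assoc, Rinv_l; lra).
    rewrite log2p_gt1 by auto. rewrite (log2_split (L i) (L m) D0) by lra.
    pose proof (log2_pos _ HmD). lra. }
  assert (0 < / 2 * log2p (L m / D0)) by (rewrite log2p_gt1 by auto; pose proof (log2_pos _ HmD); lra).
  rewrite <- fsum_scal. lra.
Qed.

Lemma loss_bound d m (s L T : nat -> R) R0 D :
  (1 <= m <= d)%nat -> (forall j, (j < d)%nat -> 0 < s j) ->
  (forall j, (j < d)%nat -> 0 <= L j) ->
  is_water_level d L R0 D ->
  (forall j, (m <= j < d)%nat -> L j <= D) ->
  (forall j, (j < d)%nat -> s j * xj D (L j) <= T j) ->
  INR m * delta s m R0 + (fsum d s - fsum m s) <= fsum d T.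
Proof.
  intros Hm Hs HL [HD HW] Hin HT.
  assert (Hx : forall j, (j < d)%nat -> 0 < xj D (L j)).
  { intros j Hj. unfold xj. destruct (Rlt_dec D (L j)); [apply Rdiv_lt_0_compat; lra|lra]. }
  assert (Hx1 : forall j, (m <= j < d)%nat -> xj D (L j) = 1).
  { intros j Hj. unfold xj. destruct (Rlt_dec D (L j)); auto. specialize (Hin j Hj). lra. }
  assert (H1 : fsum d (fun j => if lt_dec j m then s j * xj D (L j) else s j) <= fsum d T).
  { apply fsum_le. intros j Hj. destruct (lt_dec j m).
    - apply HT; auto.
    - rewrite <- (Rmult_1_r (s j)). rewrite <- (Hx1 j) by lia. apply HT; auto. }
  rewrite fsum_split in H1 by lia.
  assert (H2 : INR m * exp (fsum m (fun j => ln (s j * xj D (L j))) / INR m) <= fsum m (fun j => s j * xj D (L j))).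
  { apply amgm; [lia|]. intros j Hj. apply Rmult_lt_0_compat; [apply Hs|apply Hx]; lia. }
  assert (HW' : R0 = fsum m (fun j => / 2 * log2p (L j / D))).
  { rewrite <- HW.
    rewrite (fsum_ext d _ (fun j => if lt_dec j m then / 2 * log2p (L j / D) else 0)).
    - rewrite fsum_split by lia. rewrite !fsum_zero. lra.
    - intros j Hj. destruct (lt_dec j m); auto. rewrite log2p_le1. lra.
      specialize (Hin j ltac:(lia)). apply (Rmult_le_reg_r D); auto. unfold Rdiv. rewrite Rmult_assoc, Rinv_l; lra. }
  assert (Hlx : fsum m (fun j => ln (xj D (L j))) = - 2 * ln 2 * R0).
  { rewrite HW'. rewrite <- fsum_scal. apply fsum_ext. intros j Hj.
    pose proof ln2_pos. unfold xj. destruct (Rlt_dec D (L j)).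
    - assert (1 < L j / D) by (apply (Rmult_lt_reg_r D); auto; unfold Rdiv; rewrite Rmult_assoc, Rinv_l; lra).
      rewrite log2p_gt1 by auto. unfold log2.
      replace (D / L j) with (/ (L j / D)) by (field; lra). rewrite ln_Rinv by lra. field. lra.
    - rewrite log2p_le1. rewrite ln_1. ring.
      apply (Rmult_le_reg_r D); auto. unfold Rdiv. rewrite Rmult_assoc, Rinv_l; lra. }
  assert (Hls : fsum m (fun j => ln (s j * xj D (L j))) = fsum m (fun j => ln (s j)) + fsum m (fun j => ln (xj D (L j)))).
  { rewrite <- fsum_plus. apply fsum_ext. intros j Hj. apply ln_mult; [apply Hs|apply Hx]; lia. }
  assert (Hdel : delta s m R0 = exp (fsum m (fun j => ln (s j * xj D (L j))) / INR m)).
  { unfold delta, Rpower. rewrite <- exp_plus. f_equal.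
    destruct (fprod_ln m s) as [_ Hp]. intros; apply Hs; lia. rewrite Hp, Hls, Hlx.
    assert (0 < INR m) by (apply lt_0_INR; lia). field. lra. }
  rewrite Hdel. lra.
Qed.

Lemma g_mono eps s1 s2 T : 0 < eps < 1 -> 0 <= T -> 0 < s1 -> s1 < s2 ->
  s1 * g eps s1 T < s2 * g eps s2 T.
Proof.
  intros He HT H1 H12.
  assert (Hg : g eps s1 T <= g eps s2 T).
  { unfold g. apply Rinv_le_contravar.
    - assert (0 < (1 - eps^2)/eps^2) by (apply Rdiv_lt_0_compat; nra).
      pose proof (exp_pos (-4 * s2 * T)). nra.
    - assert (0 < (1 - eps^2)/eps^2) by (apply Rdiv_lt_0_compat; nra).
      assert (exp (-4 * s2 * T) <= exp (-4 * s1 * T)).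
      { destruct (Req_dec T 0) as [->|]. rewrite !Rmult_0_r. lra.
        left. apply exp_increasing. nra. }
      nra. }
  pose proof (g_bounds eps s2 T He). nra.
Qed.

Theorem theorem1
  (d : nat) (s : nat -> R) (eps R0 Twu : R)
  (u v : nat -> R -> R) (Dst : R -> R) (Linf : R) (m : nat) :
  (1 <= d)%nat ->
  (forall j, (j < d)%nat -> 0 < s j) ->
  (forall j, (S j < d)%nat -> s (S j) < s j) ->
  0 < eps < 1 -> 0 < R0 -> 0 <= Twu ->
  (* initial condition and continuity on [0, oo) *)
  (forall j, (j < d)%nat -> u j 0 = eps /\ v j 0 = eps) ->
  (forall j, (j < d)%nat ->
     filterlim (u j) (at_right 0) (locally (u j 0)) /\
     filterlim (v j) (at_right 0) (locally (v j 0)) /\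
     (forall t, 0 < t -> continuous (u j) t /\ continuous (v j) t)) ->
  (* warm-up phase: plain autoencoder flow on [0, Twu] *)
  (forall j t, (j < d)%nat -> 0 < t < Twu ->
     is_derive (u j) t (2 * s j * v j t * (1 - u j t * v j t)) /\
     is_derive (v j) t (2 * s j * u j t * (1 - u j t * v j t))) ->
  (* Dst t is the water level of the current latent variances *)
  (forall t, Twu <= t -> is_water_level d (lam s u t) R0 (Dst t)) ->
  (* RD-AE phase, beta = 1 *)
  (forall j t, (j < d)%nat -> Twu < t ->
     let c := cj (lam s u t j) (Dst t) in
     let D := Dj (lam s u t j) (Dst t) in
     is_derive (u j) t (2 * s j * v j t * (1 - c * u j t * v j t) - 2 * 1 * D / u j t) /\
     is_derive (v j) t (2 * s j * c * u j t * (1 - u j t * v j t))) ->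
  (* L_rec^oo is the limit of the reconstruction loss *)
  is_lim (fun t => Lrec d s u v (Dst t) t) p_infty Linf ->
  is_mwu d s eps Twu R0 m ->
  (exists T, forall t, T <= t ->
     le (fcount d (fun j => Dst t < lam s u t j)
        (fun j => Rlt_dec (Dst t) (lam s u t j))) m) /\
  Linf >= INR m * delta s m R0 + (fsum d s - fsum m s).
Proof.
  intros Hd1 Hs Hsdec Heps HR0 HT Hinit Hcont Hwu HDst Hrd Hlim Hmwu.
  assert (HW : forall j, (j < d)%nat -> forall t, 0 <= t <= Twu -> u j t = v j t /\ u j t ^ 2 = g eps (s j) t).
  { intros j Hj. destruct (Hinit j Hj) as [Hu0 Hv0]. destruct (Hcont j Hj) as [Hru [Hrv Hc]].
    apply (wu (s j) eps Twu (u j) (v j)); auto. }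
  assert (HDp : forall t, Twu <= t -> 0 < Dst t) by (intros t Ht; apply (HDst t Ht)).
  assert (Hrc : forall j, (j < d)%nat ->
     filterlim (u j) (at_right Twu) (locally (u j Twu)) /\ filterlim (v j) (at_right Twu) (locally (v j Twu))).
  { intros j Hj. destruct (Hcont j Hj) as [Hru [Hrv Hc]]. destruct (Req_dec Twu 0) as [->|HT0]; auto.
    destruct (Hc Twu ltac:(lra)). split; apply cont_rc; auto. }
  assert (Hc' : forall j, (j < d)%nat -> forall t, Twu < t -> continuous (u j) t /\ continuous (v j) t).
  { intros j Hj t Ht. destruct (Hcont j Hj) as [_ [_ Hc]]. apply Hc. lra. }
  assert (Hd' : forall j, (j < d)%nat -> forall t, Twu < t ->
     is_derive (u j) t (Up (s j) (u j t) (v j t) (Dst t)) /\ is_derive (v j) t (Vp (s j) (u j t) (v j t) (Dst t))).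
  { intros j Hj t Ht. pose proof (Hrd j t Hj Ht) as X. cbv zeta in X. exact X. }
  assert (HE : forall j, (j < d)%nat -> u j Twu = v j Twu) by (intros j Hj; apply (HW j Hj Twu); lra).
  assert (Hg0 : forall j, (j < d)%nat -> u j Twu * u j Twu = g eps (s j) Twu).
  { intros j Hj. rewrite <- (proj2 (HW j Hj Twu ltac:(lra))). ring. }
  assert (Hp0 : forall j, (j < d)%nat -> 0 < u j Twu * u j Twu < 1).
  { intros j Hj. rewrite Hg0; auto. apply g_bounds; auto. }
  assert (Hmono : forall j, (j < d)%nat -> forall t, Twu <= t -> u j Twu * u j Twu <= u j t * u j t).
  { intros j Hj t Ht. destruct (Hrc j Hj).
    apply (rd_mono (s j) Twu (u j) (v j) Dst); auto. }
  set (D0 := Dst Twu).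
  assert (HD0 : forall t, Twu <= t -> D0 <= Dst t).
  { intros t Ht. apply (wl_mono d (lam s u Twu) (lam s u t) R0); auto.
    - intros j Hj. unfold lam. pose proof (Hs j Hj). pose proof (Hmono j Hj t Ht). split.
      + apply Rmult_le_pos; [apply pow2_ge_0|lra].
      + replace (u j Twu ^ 2) with (u j Twu * u j Twu) by ring.
        replace (u j t ^ 2) with (u j t * u j t) by ring. nra.
    - apply HDst; lra. }
  assert (Hin0 : forall j, (m <= j < d)%nat -> lam s u Twu j <= D0).
  { destruct Hmwu as [Hm1 [_ Hmax]].
    apply (mwu_inactive d (lam s u Twu) R0 D0 m).
    - intros j Hj. unfold lam. pose proof (Hp0 j Hj). pose proof (Hs j Hj).
      replace (u j Twu ^ 2) with (u j Twu * u j Twu) by ring. nra.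
    - intros j Hj. unfold lam. replace (u (S j) Twu ^ 2) with (u (S j) Twu * u (S j) Twu) by ring.
      replace (u j Twu ^ 2) with (u j Twu * u j Twu) by ring.
      rewrite !Hg0 by lia. rewrite (Rmult_comm (g _ _ _)), (Rmult_comm (g _ _ _)).
      apply g_mono; auto; try (apply Hs; lia); try (apply Hsdec; auto).
    - apply HDst; lra.
    - intros Hmd Hc. apply (Hmax (S m)); [lia|]. unfold mwu_cond.
      replace (S m - 1)%nat with m by lia.
      erewrite fsum_ext; [exact Hc|]. intros i Hi. cbv beta. f_equal.
      unfold lam. replace (u i Twu ^ 2) with (u i Twu * u i Twu) by ring.
      replace (u m Twu ^ 2) with (u m Twu * u m Twu) by ring.
      rewrite !Hg0 by lia. f_equal; ring. }
  assert (Hin : forall j, (m <= j < d)%nat -> forall t, Twu <= t -> lam s u t j <= Dst t).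
  { intros j Hj t Ht. pose proof (HD0 t Ht). destruct (Hrc j ltac:(lia)).
    assert (u j t * u j t * s j <= D0).
    { apply (rd_frozen (s j) Twu (u j) (v j) Dst); auto; try (apply Hs; lia);
        try (apply Hc'; lia); try (apply Hd'; lia); try (apply HE; lia); try (apply Hp0; lia).
      specialize (Hin0 j Hj). unfold lam in Hin0. replace (u j Twu ^ 2) with (u j Twu * u j Twu) in Hin0 by ring. exact Hin0. }
    unfold lam. replace (u j t ^ 2) with (u j t * u j t) by ring. lra. }
  destruct Hmwu as [Hm1 _].
  split.
  - exists Twu. intros t Ht. apply fcount_le. intros j Hj. pose proof (Hin j Hj t Ht). lra.
  - apply Rle_ge.
    assert (Hle : Rbar_le (INR m * delta s m R0 + (fsum d s - fsum m s)) Linf).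
    { apply (is_lim_le_loc (fun _ => INR m * delta s m R0 + (fsum d s - fsum m s)) (fun t => Lrec d s u v (Dst t) t) p_infty); auto.
      - exists Twu. intros t Ht. unfold Lrec.
        apply (loss_bound d m s (lam s u t) _ R0 (Dst t)); auto.
        + intros j Hj. unfold lam. apply Rmult_le_pos; [apply pow2_ge_0|]. left; apply Hs; auto.
        + apply HDst; lra.
        + intros j Hj. apply Hin; auto. lra.
        + intros j Hj. apply term_bound; auto. apply HDp; lra.
      - apply is_lim_const. }
    exact Hle.
Qed.
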